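(* Let $m\geq 2$, $n>1$ and $p\geq 1$ be integers and let $a_1,\ldots,a_m$ be positive integers with $\prod_{i=1}^m a_i\equiv 1\pmod 2$. The graph $a_1H_{n,p}\otimes a_2H_{n,p}\otimes\cdots\otimes a_mH_{n,p}$ is distance magic if and only if $n\equiv 0\pmod 2$ or $n\equiv p\equiv 1\pmod 2$.
   Context: A graph $G$ on $v$ vertices is distance magic if there is a bijection $f:V(G)\to\{1,\ldots,v\}$ and a constant $k$ such that for every vertex $x$, $\sum_{y\in N(x)}f(y)=k$, where $N(x)$ is the set of neighbours of $x$. $H_{n,p}$ denotes the complete multipartite graph with $p$ partite sets each of size $n$; $aH$ denotes the disjoint union of $a$ copies of $H$. The Kronecker (tensor) product $G\otimes H$ has vertex set $V(G)\times V(H)$, with $(g,h)\sim(g',h')$ iff $gg'\in E(G)$ and $hh'\in E(H)$. *)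

(* Defs.v *)
From mathcomp Require Import all_boot.
Set Implicit Arguments. Unset Strict Implicit. Unset Printing Implicit Defensive.

(* Distance magic: a bijection f : V -> {1,...,|V|} (encoded as
   V -> 'I_#|V| with label (f y).+1) and a constant k such that the sum
   of labels over the open neighbourhood of every vertex is k. *)
Definition distance_magic (V : finType) (e : rel V) : Prop :=
  exists f : V -> 'I_#|V|, bijective f /\
    exists k : nat, forall x : V, \sum_(y | e x y) (f y).+1 = k.

(* Vertex type of a H_{n,p}: (copy index, part index, position in part). *)
Definition aH_vert (a n p : nat) : finType := ('I_a * ('I_p * 'I_n))%type.

Definition aH_adj (a n p : nat) : rel (aH_vert a n p) :=
  fun u v => (u.1 == v.1) && (u.2.1 != v.2.1).

Definition kron_aH_vert (m n p : nat) (a : 'I_m -> nat) : finType :=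
  {dffun forall i : 'I_m, aH_vert (a i) n p}.

Definition kron_aH_adj (m n p : nat) (a : 'I_m -> nat) : rel (kron_aH_vert n p a) :=
  fun u v => [forall i, aH_adj (u i) (v i)].

Arguments kron_aH_vert : clear implicits.
Arguments kron_aH_adj : clear implicits.

(* Main.v *)
Require Import Defs.
From mathcomp Require Import all_boot zify.
Set Implicit Arguments. Unset Strict Implicit. Unset Printing Implicit Defensive.

Definition Kt m p (a : 'I_m -> nat) : finType := {dffun forall i : 'I_m, 'I_(a i) * 'I_p}.
Definition Rt m n : finType := {ffun 'I_m -> 'I_n}.

Definition kap m n p a (x : kron_aH_vert m n p a) : Kt p a :=
  finfun (fun i => ((x i).1, (x i).2.1)).
Definition rho m n p a (x : kron_aH_vert m n p a) : Rt m n :=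
  [ffun i => (x i).2.2].
Definition Phi m n p a (u : Kt p a * Rt m n) : kron_aH_vert m n p a :=
  finfun (fun i => ((u.1 i).1, ((u.1 i).2, u.2 i))).
Definition Rk (m : nat) p (a : 'I_m -> nat) (k k' : Kt p a) : bool :=
  [forall i, ((k i).1 == (k' i).1) && ((k i).2 != (k' i).2)].

Lemma kapPhi m n p a u : kap (@Phi m n p a u) = u.1.
Proof. apply/ffunP => i; rewrite !ffunE /=. by case: (u.1 i). Qed.
Lemma rhoPhi m n p a u : rho (@Phi m n p a u) = u.2.
Proof. apply/ffunP => i; rewrite !ffunE /=. by []. Qed.
Lemma PhiK m n p a x : @Phi m n p a (kap x, rho x) = x.
Proof. apply/ffunP => i; rewrite !ffunE /=. by case: (x i) => [? []]. Qed.

Lemma Phi_bij m n p a : bijective (@Phi m n p a).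
Proof.
exists (fun x => (kap x, rho x)); first by case=> k r; rewrite kapPhi rhoPhi.
exact: PhiK.
Qed.

Lemma adjE m n p a x y : kron_aH_adj m n p a x y = Rk (kap x) (kap y).
Proof. apply: eq_forallb => i; by rewrite /aH_adj !ffunE. Qed.

Lemma RkC m p a k k' : @Rk m p a k k' = Rk k' k.
Proof. apply: eq_forallb => i; by rewrite eq_sym [_.2 == _]eq_sym. Qed.

Lemma foldr_prod (T : finType) (g : T -> nat) :
  foldr muln 1 [seq g x | x : T] = \prod_x g x.
Proof.
rewrite /image_mem foldr_map -big_enum /= unlock /reducebig.
by [].
Qed.

Lemma cardK m p (a : 'I_m -> nat) : #|Kt p a| = \prod_(i < m) (a i * p).
Proof.
rewrite /Kt card_dep_ffun foldr_prod; apply: eq_bigr => i _.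
by rewrite card_prod !card_ord.
Qed.

Lemma cardRt m n : #|Rt m n| = n ^ m.
Proof. by rewrite /Rt card_ffun !card_ord. Qed.

Lemma cardR m p (a : 'I_m -> nat) (k : Kt p a) :
  #|[pred k' | Rk k k']| = p.-1 ^ m.
Proof.
pose F := fun i : 'I_m => [pred z : 'I_(a i) * 'I_p | (z.1 == (k i).1) && (z.2 != (k i).2)].
have -> : #|[pred k' | Rk k k']| = #|(family F : simpl_pred (Kt p a))|.
  apply: eq_card => k'; rewrite !inE; apply/forallP/familyP => H i; move: (H i);
  by rewrite !inE eq_sym [_.2 == _]eq_sym.
rewrite card_family foldr_prod.
rewrite (eq_bigr (fun _ => p.-1)) ?prod_nat_const ?card_ord // => i _.
have -> : #|F i| = #|setX [set (k i).1] [set~ (k i).2]|.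
  by apply: eq_card => z; rewrite !inE.
by rewrite cardsX cards1 cardsC1 card_ord mul1n.
Qed.
Lemma cardV m n p (a : 'I_m -> nat) :
  #|kron_aH_vert m n p a| = #|Kt p a| * #|Rt m n|.
Proof. by rewrite -card_prod; apply/esym/bij_eq_card/Phi_bij. Qed.

Lemma nbr_sum m n p a x (F : kron_aH_vert m n p a -> nat) :
  \sum_(y | kron_aH_adj m n p a x y) F y =
  \sum_(k | Rk (kap x) k) \sum_(r : Rt m n) F (Phi (k, r)).
Proof.
rewrite (reindex (@Phi m n p a)) /=; last exact/onW_bij/Phi_bij.
rewrite pair_big /=. apply: eq_big => [[k r]|[k r] _] /=; by rewrite ?adjE ?kapPhi ?andbT.
Qed.

Lemma sumS N : (\sum_(j < N) j.+1) * 2 = N * N.+1.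
Proof.
elim: N => [|N IH]; first by rewrite big_ord0.
rewrite big_ord_recr /= mulnDl IH. lia.
Qed.
Definition psiE G r g := if odd r then G.-1 - g else g.

Lemma psiE_sum G s g : g < G -> \sum_(r < s.*2) psiE G r g = s * G.-1.
Proof.
move=> gG; elim: s => [|s IH]; first by rewrite big_ord0.
rewrite doubleS !big_ord_recr /= IH /psiE /= odd_double /=. lia.
Qed.

Definition psiO h r g :=
  match r with
  | 0 => g
  | 1 => if g <= h then g + h else g - h - 1
  | 2 => if g <= h then 2 * h - 2 * g else 4 * h + 1 - 2 * g
  | _ => if odd r then g else 2 * h - g
  end.

Lemma psiO_sum h s g : g < 2 * h + 1 ->
  \sum_(r < 2 * s + 3) psiO h r g = 3 * h + s * (2 * h).
Proof.
move=> gG; elim: s => [|s IH].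
  rewrite !big_ord_recr big_ord0 /=. by case: (leqP g h) => H; lia.
have -> : 2 * s.+1 + 3 = (2 * s + 3).+2 by lia.
rewrite !big_ord_recr /= IH /psiO /=.
have -> : 2 * s + 3 = (2 * s).+3 by lia.
rewrite !oddS oddM /=. lia.
Qed.

Lemma psi_exists G t : ~~ odd t \/ [/\ odd G, odd t & 2 < t] ->
  exists psi : nat -> nat -> nat,
    (forall r g, g < G -> psi r g < G) /\
    (forall r g g', g < G -> g' < G -> psi r g = psi r g' -> g = g') /\
    exists C, forall g, g < G -> \sum_(r < t) psi r g = C.
Proof.
case => [ev | [oG ot t2]].
  have Et : t = (t./2).*2 by rewrite -{1}(odd_double_half t) (negbTE ev).
  move: (t./2) Et => s ->.
  exists (psiE G); split; [|split].
  - move=> r g gG; rewrite /psiE; case: odd => //; lia.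
  - move=> r g g' gG g'G; rewrite /psiE; case: odd => //; lia.
  - by exists (s * G.-1) => g gG; rewrite psiE_sum.
have hG : G = 2 * (G./2) + 1 by rewrite -{1}(odd_double_half G) oG -mul2n addnC.
set h := G./2 in hG. clearbody h. subst G.
have [s ->] : exists s, t = 2 * s + 3.
  by exists (t./2).-1; move: (odd_double_half t); rewrite ot -mul2n => E; lia.
exists (psiO h); split; [|split].
- move=> [|[|[|r]]] g gG /=; try lia.
  + case: (leqP g h) => ?; lia.
  + case: (leqP g h) => ?; lia.
  + case: odd => /=; lia.
- move=> [|[|[|r]]] g g' gG g'G /=; try lia.
  + case: (leqP g h) => ?; case: (leqP g' h) => ?; lia.
  + case: (leqP g h) => ?; case: (leqP g' h) => ?; lia.
  + case: odd => /=; lia.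
- by exists (3 * h + s * (2 * h)) => g gG; rewrite psiO_sum.
Qed.

Lemma suff_dm m n p (a : 'I_m -> nat) :
  ~~ odd #|Rt m n| \/ [/\ odd #|Kt p a|, odd #|Rt m n| & 2 < #|Rt m n|] ->
  distance_magic (kron_aH_adj m n p a).
Proof.
move=> H.
have [psi [pb [pinj [C HC]]]] := psi_exists H.
pose f0 (x : kron_aH_vert m n p a) :=
  enum_rank (rho x) * #|Kt p a| + psi (enum_rank (rho x)) (enum_rank (kap x)).
have f0lt x : f0 x < #|kron_aH_vert m n p a|.
  rewrite cardV /f0.
  have := pb (enum_rank (rho x)) _ (ltn_ord (enum_rank (kap x))).
  have := ltn_ord (enum_rank (rho x)).
  move: (enum_rank (rho x) : nat) (psi _ _) => r s rt sG.
  apply: (@leq_trans (r.+1 * #|Kt p a|)); first by rewrite mulSn; lia.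
  by rewrite mulnC leq_mul2l rt orbT.
pose f x := Ordinal (f0lt x).
have finj : injective f.
  move=> x y /(congr1 val); rewrite /= /f0 => E.
  have G0 : 0 < #|Kt p a| by apply: leq_ltn_trans (ltn_ord (enum_rank (kap x))).
  have Er : enum_rank (rho x) = enum_rank (rho y).
    apply: ord_inj; have := congr1 (divn^~ #|Kt p a|) E.
    by rewrite /= !divnMDl // !divn_small ?addn0 ?pb.
  rewrite Er in E; move/addnI: E => /pinj E.
  have Ek : kap x = kap y by apply/enum_rank_inj/ord_inj/E.
  by rewrite -(PhiK x) -(PhiK y) Ek (enum_rank_inj Er).
exists f; split; first by apply: inj_card_bij finj _; rewrite card_ord.
exists ((p.-1)^m * (C + \sum_(j < #|Rt m n|) (j * #|Kt p a|).+1)).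
move=> x; rewrite nbr_sum -(cardR (kap x)) -sum_nat_const.
apply: eq_bigr => k _.
transitivity (\sum_(j < #|Rt m n|) ((j * #|Kt p a|).+1 + psi j (enum_rank k))).
  rewrite [RHS](reindex enum_rank) /=; last first.
    by apply/onW_bij; exists enum_val; [exact: enum_rankK | exact: enum_valK].
  by apply: eq_bigr => r _; rewrite /f /f0 /= kapPhi rhoPhi addSn.
by rewrite big_split /= HC // addnC.
Qed.

Lemma deg_eq m n p (a : 'I_m -> nat) y :
  #|[pred x | kron_aH_adj m n p a x y]| = p.-1 ^ m * #|Rt m n|.
Proof.
have -> : #|[pred x | kron_aH_adj m n p a x y]| = \sum_(x | kron_aH_adj m n p a y x) 1.
  rewrite -sum1_card; apply: eq_bigl => x; by rewrite !inE !adjE RkC.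
rewrite nbr_sum -(cardR (kap y)) -sum_nat_const.
by apply: eq_bigr => k _; rewrite sum1_card.
Qed.

Lemma nec_dm m n p (a : 'I_m -> nat) :
  distance_magic (kron_aH_adj m n p a) ->
  0 < #|kron_aH_vert m n p a| ->
  odd (p.-1 ^ m * #|Rt m n|) -> odd #|kron_aH_vert m n p a|.
Proof.
case=> f [fb [k Hk]] N0 od.
set d := p.-1 ^ m * #|Rt m n| in od.
set N := #|kron_aH_vert m n p a| in f fb Hk *.
have E1 : \sum_x \sum_(y | kron_aH_adj m n p a x y) (f y).+1 = N * k.
  by rewrite (eq_bigr (fun _ => k)) // sum_nat_const.
rewrite (exchange_big_dep xpredT) // in E1.
rewrite (eq_bigr (fun y => d * (f y).+1)) in E1; last first.
  by move=> y _; rewrite sum_nat_const deg_eq.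
rewrite -big_distrr /= in E1.
rewrite -(reindex f (P := xpredT) (F := fun j : 'I_N => j.+1)) /= in E1; last exact: onW_bij.
have := sumS N.
move: (\sum_(j < N) j.+1) E1 => S E1 E2.
have H3 : N * (d * N.+1) = N * (k * 2) by rewrite mulnCA -E2 mulnA E1 mulnA.
move/eqP: H3; rewrite eqn_pmul2l // => /eqP /(congr1 odd).
rewrite [odd (d * _)]oddM od [odd (k * _)]oddM andbF /=; by case: (odd N).
Qed.

Theorem theorem17 (m n p : nat) (a : 'I_m -> nat) :
  2 <= m -> 1 < n -> 1 <= p ->
  (forall i, 0 < a i) ->
  odd (\prod_(i < m) a i) ->
  distance_magic (kron_aH_adj m n p a) <->
  (~~ odd n \/ (odd n /\ odd p)).
Proof.
move=> m2 n1 p1 apos oA.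
have i0 : 'I_m by exists 0; lia.
have oa i : odd (a i) by move: oA; rewrite (bigD1 i) //= oddM => /andP[].
split => [DM | H].
  case on: (odd n); [right; split => //| by left].
  case op: (odd p) => //.
  have := nec_dm DM.
  rewrite cardV cardK cardRt (bigD1 i0) //= !oddM oddX op andbF andFb.
  rewrite !oddX on orbT andbT (_ : odd p.-1 = true); last first.
    by case: (p) op p1 => //= q /negbFE.
  rewrite orbT; apply.
  rewrite muln_gt0 expn_gt0; apply/andP; split; last lia.
  rewrite !muln_gt0 apos p1 /=; apply: prodn_gt0 => i; rewrite muln_gt0 apos; lia.
  by [].
apply: suff_dm; rewrite cardRt cardK.
case: H => [en | [on op]].
  by left; rewrite oddX (negbTE en) orbF; case: (m) m2.
right; split.
- apply: (big_ind odd) => // [x y ox oy|i _]; first by rewrite oddM ox oy.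
  by rewrite oddM oa op.
- by rewrite oddX on orbT.
- apply: (@leq_trans n); first by case: (n) n1 on => [|[|[|]]].
  by rewrite -{1}(expn1 n) leq_pexp2l //; lia.
Qed.
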